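(* Let $V$ be a finite-dimensional complex vector space with a Hermitian inner product, $\mathbf G$ a finite group of unitary transformations of $V$, and $\mathbf x_0\in V$ a unit vector with full orbit under $\mathbf G$. If $H\le K\le\mathbf G$ and $\operatorname{CL}$ is a greed compatible set of left coset representatives of $H$ in $K$ containing $I$, then every element of $\operatorname{CL}$ is minimal.
   Context: Full orbit: $|\mathbf G\mathbf x_0|=|\mathbf G|$. For a subgroup $H$, $\operatorname{FR}(H)=\{\mathbf x:\|\mathbf x-\mathbf x_0\|<\|h\mathbf x-\mathbf x_0\|\ \forall h\in H\setminus\operatorname{Stab}_H(\mathbf x_0)\}$. $\operatorname{CL}$ is greed compatible if for every $\mathbf x\in\operatorname{FR}(H)$ there is $c\in\operatorname{CL}$ with $c\mathbf x\in\operatorname{FR}(K)$. An element $c\in\operatorname{CL}$ is minimal if $\mathbf x_0\in c(\operatorname{FR}(H))$. *)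

(* Defs.v *)
From mathcomp Require Import all_boot all_algebra all_fingroup reals complex.
Set Implicit Arguments. Unset Strict Implicit. Unset Printing Implicit Defensive.
Import GRing.Theory Num.Theory.
Local Open Scope ring_scope.

Section Defs.
Variables (R : realType) (n : nat).
Local Notation C := (R[i]).
Local Notation V := 'cV[C]_n.

Definition hdot (u v : V) : C := \sum_(i < n) u i 0 * (v i 0)^*.
Definition hnorm (x : V) : C := sqrtC (hdot x x).

Definition adjmx (A : 'M[C]_n) : 'M[C]_n := map_mx Num.conj A^T.
Definition unitary (A : 'M[C]_n) : Prop := adjmx A *m A = 1%:M.

Variables (gT : finGroupType) (rho : gT -> 'M[C]_n) (x0 : V).

Definition stab (H : {set gT}) : {set gT} := [set h in H | rho h *m x0 == x0].

Definition FR (H : {set gT}) (x : V) : Prop :=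
  forall h, h \in H -> h \notin stab H -> hnorm (x - x0) < hnorm (rho h *m x - x0).

Definition greed_compatible (H K CL : {set gT}) : Prop :=
  forall x, FR H x -> exists2 c, c \in CL & FR K (rho c *m x).

Definition minimal (H : {set gT}) (c : gT) : Prop :=
  exists2 x, FR H x & rho c *m x = x0.
End Defs.

(* Main.v *)
Require Import Defs.
From mathcomp Require Import all_boot all_algebra all_fingroup reals complex.
From mathcomp Require Import ring lra.
Import order.Order.TTheory GRing.Theory Num.Theory.
Local Open Scope ring_scope.
Section S.
Variables (R : realType) (n : nat).
Local Notation C := (R[i]).
Local Notation V := 'cV[C]_n.
Lemma hdotE (u v : V) : hdot u v = ((map_mx Num.conj v^T) *m u) 0 0.
Proof. rewrite /hdot mxE; apply: eq_bigr => i _; by rewrite !mxE mulrC. Qed.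
Lemma hdot_unitary (A : 'M[C]_n) (u v : V) : unitary A -> hdot (A *m u) (A *m v) = hdot u v.
Proof.
move=> hA; rewrite !hdotE trmx_mul map_mxM -mulmxA (mulmxA _ A) -[map_mx _ A^T]/(adjmx A) hA mul1mx //.
Qed.
Definition nr (u : V) : R := \sum_(i < n) ((complex.Re (u i 0))^+2 + (complex.Im (u i 0))^+2).
Lemma hdot_nr (u : V) : hdot u u = (nr u)%:C%C.
Proof.
rewrite /hdot /nr rmorph_sum; apply: eq_bigr => i _.
case: (u i 0) => a b /=. rewrite /GRing.mul /=; congr Complex; rewrite ?expr2; ring.
Qed.
Lemma nr_ge0 u : 0 <= nr u.
Proof. by apply: sumr_ge0 => i _; apply: addr_ge0; apply: sqr_ge0. Qed.
Lemma nr_eq0 u : nr u = 0 -> u = 0.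
Proof.
move=> /eqP; rewrite psumr_eq0 => [/allP H|i _]; last by apply: addr_ge0; apply: sqr_ge0.
apply/matrixP => i j; rewrite ord1 mxE.
have /H : i \in index_enum 'I_n by rewrite mem_index_enum.
rewrite /= paddr_eq0 ?sqr_ge0 // !sqrf_eq0 => /andP[/eqP a /eqP b].
by apply/eqP; rewrite eq_complex /= a b !eqxx.
Qed.
Lemma hnorm_lt (u v : V) : (hnorm u < hnorm v) = (nr u < nr v).
Proof.
rewrite /hnorm !hdot_nr ltr_sqrtC ?ltcR // qualifE /= ler0c nr_ge0 //.
Qed.
Lemma hdotDl (u1 u2 v : V) : hdot (u1 + u2) v = hdot u1 v + hdot u2 v.
Proof. rewrite /hdot -big_split; apply: eq_bigr => i _; by rewrite mxE mulrDl. Qed.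
Lemma hdotDr (u v1 v2 : V) : hdot u (v1 + v2) = hdot u v1 + hdot u v2.
Proof. rewrite /hdot -big_split; apply: eq_bigr => i _; by rewrite mxE rmorphD mulrDr. Qed.
Lemma hdotZl a (u v : V) : hdot (a *: u) v = a * hdot u v.
Proof. rewrite /hdot mulr_sumr; apply: eq_bigr => i _; by rewrite mxE mulrA. Qed.
Lemma hdotZr a (u v : V) : hdot u (a *: v) = a^* * hdot u v.
Proof. rewrite /hdot mulr_sumr; apply: eq_bigr => i _; by rewrite mxE rmorphM mulrCA. Qed.
Lemma hdotC (u v : V) : hdot v u = (hdot u v)^*.
Proof. rewrite /hdot rmorph_sum; apply: eq_bigr => i _; by rewrite rmorphM /= conjCK mulrC. Qed.
Definition ip (u v : V) : R := complex.Re (hdot u v).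
Lemma nr_expand (u w : V) (t : R) :
  nr (u + (t%:C)%C *: w) = nr u + t * (2 * ip u w) + t ^+ 2 * nr w.
Proof.
apply: (@complexI R).
rewrite -hdot_nr hdotDl !hdotDr !hdotZl !hdotZr !hdot_nr.
have -> : (t%:C)%C^* = (t%:C)%C by exact: conjc_real.
rewrite (hdotC u w).
have E : hdot u w + (hdot u w)^* = 2%:R * ((ip u w)%:C)%C by exact: addcJ.
rewrite !rmorphD !rmorphM /=.
have -> : (2 : R)%:C%C = 2%:R by rewrite rmorph_nat.
rewrite -E.
ring.
Qed.
Lemma nr_unitary (A : 'M[C]_n) (v : V) : unitary A -> nr (A *m v) = nr v.
Proof. by move=> hA; apply: (@complexI R); rewrite -!hdot_nr hdot_unitary. Qed.
Lemma hdot0l (w : V) : hdot 0 w = 0.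
Proof. by rewrite /hdot big1 // => i _; rewrite mxE mul0r. Qed.
Lemma nr0 : nr 0 = 0.
Proof. by apply: (@complexI R); rewrite -hdot_nr hdot0l. Qed.
Lemma ip0 (w : V) : ip 0 w = 0.
Proof. by rewrite /ip hdot0l. Qed.
Lemma nrN (u : V) : nr (- u) = nr u.
Proof.
apply: (@complexI R); rewrite -!hdot_nr -scaleN1r hdotZl hdotZr.
by rewrite rmorphN rmorph1 mulrA mulrNN !mul1r.
Qed.
Lemma ipN (u : V) : ip (- u) u = - nr u.
Proof.
by rewrite /ip -scaleN1r hdotZl hdot_nr mulN1r /=.
Qed.
Lemma nr_gt0 (u : V) : u != 0 -> 0 < nr u.
Proof. by move=> u0; rewrite lt_def nr_ge0 andbT; apply: contra u0 => /eqP/nr_eq0 ->. Qed.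
End S.
Arguments nr {R n}.
Arguments ip {R n}.
Arguments nr_gt0 {R n u}.

Lemma small_t (R : realType) (I : finType) (P : pred I) (a b : I -> R) :
  (forall i, P i -> 0 < a i) ->
  exists t : R, [/\ 0 < t, t <= 1 & forall i, P i -> 0 < a i + t * b i].
Proof.
move=> Ha; set M := \sum_(i | P i) (`|b i| / a i).
have M0 : 0 <= M by apply: sumr_ge0 => i Pi; apply: divr_ge0 => //; exact: ltW (Ha i Pi).
have M1 : 0 < 1 + M by lra.
exists (1 / (1 + M)); split.
- by apply: divr_gt0.
- by rewrite ler_pdivrMr // mul1r; lra.
- move=> i Pi.
  have ai := Ha i Pi.
  have hb : `|b i| / a i <= M.
    rewrite /M (bigD1 i) //= lerDl; apply: sumr_ge0 => j /andP[Pj _].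
    by apply: divr_ge0 => //; exact: ltW (Ha j Pj).
  have hb' : `|b i| <= M * a i by rewrite -ler_pdivrMr.
  have hn : - `|b i| <= b i by rewrite lerNl -normrN; exact: ler_norm.
  set s := 1 / (1 + M).
  have hs : s * (1 + M) = 1 by rewrite /s mul1r mulVf // gt_eqF.
  have s0 : 0 < s by apply: divr_gt0.
  nra.
Qed.

Lemma uniq_map_inj (T1 T2 : eqType) (f : T1 -> T2) (s : seq T1) :
  uniq (map f s) -> {in s &, injective f}.
Proof.
move=> U x y xs ys fxy.
move/(uniqP (f x)): U => U.
have := U (index x s) (index y s).
rewrite !inE size_map !index_mem xs ys => /(_ isT isT).
rewrite !(nth_map x) ?index_mem // !nth_index // => /(_ fxy) E.
by rewrite -(nth_index x xs) -(nth_index x ys) E.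
Qed.

Theorem mainTheorem12 (R : realType) (n : nat) (gT : finGroupType)
  (G H K : {group gT}) (rho : gT -> 'M[R[i]]_n) (x0 : 'cV[R[i]]_n)
  (CL : {set gT})
  (rho_mul : {in G &, forall g h, rho (g * h)%g = rho g *m rho h})
  (rho_inj : {in G &, injective rho})
  (rho_unitary : forall g, g \in G -> unitary (rho g))
  (x0_unit : hnorm x0 = 1)
  (full_orbit : size (undup [seq rho g *m x0 | g <- enum G]) = #|G|)
  (HK : H \subset K) (KG : K \subset G)
  (CL_trans : is_transversal CL (lcosets H K) K)
  (CL_1 : 1%g \in CL)
  (CL_greedy : greed_compatible rho x0 H K CL) :
  forall c, c \in CL -> minimal rho x0 H c.
Proof.
move=> c cCL.
have CLK : CL \subset K := transversal_sub CL_trans.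
have inG : forall g, g \in K -> g \in G := fun g gK => subsetP KG g gK.
have HG : forall g, g \in H -> g \in G := fun g gH => inG g (subsetP HK g gH).
have rho1 : rho 1%g = 1%:M.
  have h := rho_mul _ _ (group1 G) (group1 G); rewrite mulg1 in h.
  have U := rho_unitary _ (group1 G); rewrite /unitary in U.
  transitivity (adjmx (rho 1%g) *m rho 1%g *m rho 1%g); first by rewrite U mul1mx.
  by rewrite -mulmxA -h U.
have rhoV g : g \in G -> rho g *m rho (g^-1)%g = 1%:M.
  by move=> gG; rewrite -rho_mul ?groupV // mulgV rho1.
have mv g (x y : 'cV[R[i]]_n) : g \in G -> nr (rho g *m x - y) = nr (x - rho (g^-1)%g *m y).
  move=> gG; have -> : rho g *m x - y = rho g *m (x - rho (g^-1)%g *m y).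
    by rewrite mulmxBr mulmxA rhoV // mul1mx.
  by rewrite nr_unitary //; exact: rho_unitary.
have orb : {in G &, forall g g', rho g *m x0 = rho g' *m x0 -> g = g'}.
  have U : uniq [seq rho g *m x0 | g <- enum G].
    apply: negbNE; rewrite -ltn_size_undup full_orbit size_map -cardE ltnn //.
  move=> g g2 gG g2G E; apply: (@uniq_map_inj _ _ _ _ U) E; by rewrite mem_enum.
have stab1 g : g \in G -> (rho g *m x0 == x0) = (g == 1%g).
  move=> gG; apply/eqP/eqP => [E|->]; last by rewrite rho1 mul1mx.
  by apply: orb; rewrite ?group1 // rho1 mul1mx.
have cK : c \in K := subsetP CLK c cCL.
have cG := inG c cK.
set p := rho (c^-1)%g *m x0.
case: (pickP [pred h | (h \in H) && (h \notin stab rho x0 H) &&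
    ~~ (hnorm (p - x0) < hnorm (rho h *m p - x0))]) => [hb | none]; last first.
  exists p; last by rewrite /p mulmxA rhoV // mul1mx.
  move=> h hH hns; have := none h; rewrite /= hH hns /=.
  by move/negbFE.
move=> /andP[/andP[hbH hbns] hbbad].

have hb1 : hb != 1%g.
  apply: contraNneq hbns => ->; rewrite inE group1 /= rho1 mul1mx eqxx //.
set F := fun h => nr (rho h *m p - x0).
rewrite hnorm_lt -leNgt in hbbad.
have hbP : (hb \in H) && (hb != 1%g) by rewrite hbH hb1.
have [hs /andP[hsH hs1] hsmin] := @arg_minP _ R _ hb [pred h | (h \in H) && (h != 1%g)] F hbP.
set q := rho hs *m p.
set w := x0 - q.
have qmin : forall h, h \in H -> nr (q - x0) <= nr (rho h *m q - x0).
  move=> h hH; rewrite /q mulmxA -rho_mul ?HG //.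
  have hhs : (h * hs)%g \in H by rewrite groupM.
  case: (eqVneq (h * hs)%g 1%g) => [->|ne1].
    rewrite rho1 mul1mx; apply: le_trans hbbad; exact: hsmin.
  by apply: hsmin; rewrite /= hhs ne1.
have apos : forall g, (g \in K) && (rho g *m x0 != q) -> 0 < nr (q - rho g *m x0).
  by move=> g /andP[_ ne]; apply: nr_gt0; rewrite subr_eq0 eq_sym.
have [t [t0 t1 ht]] := small_t R gT [pred g | (g \in K) && (rho g *m x0 != q)]
  (fun g => nr (q - rho g *m x0)) (fun g => 2 * ip (q - rho g *m x0) w) apos.
set x := q + (t%:C)%C *: w.
have xFR : FR rho x0 H x.
  move=> h hH hns.
  rewrite inE hH /= stab1 ?HG // in hns.
  rewrite hnorm_lt mv ?HG //.
  set z := rho (h^-1)%g *m x0.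
  have zne : x0 - z != 0.
    rewrite subr_eq0; apply: contra hns => /eqP E.
    by rewrite -(stab1 _ (HG _ hH)) {1}E /z mulmxA rhoV ?HG // mul1mx.
  have hz := nr_gt0 zne.
  have hq := qmin h hH; rewrite mv ?HG // -/z in hq.
  have E1 : x - x0 = (q - x0) + (t%:C)%C *: w by rewrite /x addrAC.
  have E2 : x - z = (q - z) + (t%:C)%C *: w by rewrite /x addrAC.
  have E3 : x0 - z = (q - z) + (1%:C)%C *: w.
    by rewrite scale1r /w [RHS]addrC addrA subrK.
  have Ew : q - x0 = - w by rewrite /w opprB.
  rewrite E3 nr_expand in hz.
  rewrite E1 E2 !nr_expand Ew nrN ipN.
  rewrite Ew nrN in hq.
  nra.
have [c' c'CL c'FR] := CL_greedy x xFR.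
have c'K : c' \in K := subsetP CLK c' c'CL.
have c'G := inG c' c'K.
have hsG := HG hs hsH.
have hsK : hs \in K := subsetP HK hs hsH.
set k := (c * hs^-1 * c'^-1)%g.
have kK : k \in K by rewrite /k !groupM ?groupV.
have kG := inG k kK.
have qE : rho (hs * c^-1)%g *m x0 = q by rewrite rho_mul ?groupV // -mulmxA.
have nrxq : nr (x - q) = t ^+ 2 * nr w.
  have -> : x - q = 0 + (t%:C)%C *: w by rewrite /x add0r addrAC subrr add0r.
  by rewrite nr_expand nr0 ip0; lra.
have key : k = 1%g.
  case: (boolP (k \in stab rho x0 K)) => ks.
    by move: ks; rewrite inE => /andP[_]; rewrite stab1 // => /eqP.
  have := c'FR k kK ks; rewrite hnorm_lt mulmxA -rho_mul //.
  have -> : (k * c')%g = (c * hs^-1)%g by rewrite /k -mulgA mulVg mulg1.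
  rewrite !mv ?groupM ?groupV // invMg invgK qE nrxq.
  case: (eqVneq (rho (c'^-1)%g *m x0) q) => [Ey|Ey].
    move=> _; rewrite -qE in Ey; have := orb _ _ (groupVr c'G) (groupM hsG (groupVr cG)) Ey.
    by move=> E2; rewrite /k E2 mulgA mulgKV mulgV.
  have := ht (c'^-1)%g; rewrite /= groupV c'K Ey => /(_ isT) hpos.
  have -> : x - rho (c'^-1)%g *m x0 = (q - rho (c'^-1)%g *m x0) + (t%:C)%C *: w by rewrite /x addrAC.
  rewrite nr_expand => hlt; have : (0:R) < 0 by lra.
  by rewrite ltxx.
have c'E : c' = (c * hs^-1)%g.
  by rewrite -[c']mul1g -key /k mulgKV.
have Bin : (c *: H)%g \in lcosets H K.
  by apply/imsetP; exists c => //; rewrite lcosetE.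
have := setI_transversal_pblock CL_trans c Bin.
move=> /setP SI.
have cB : c \in (c *: H)%g by rewrite mem_lcoset mulVg group1.
have c'B : c' \in (c *: H)%g by rewrite mem_lcoset c'E mulKg groupV.
have := SI c; rewrite !inE cCL cB => /esym/eqP e1.
have := SI c'; rewrite !inE c'CL c'B => /esym/eqP e2.
have cc : c' = c by rewrite e1 e2.
have h1 : (hs^-1)%g = 1%g by apply: (mulgI c); rewrite mulg1 -c'E cc.
by move: hs1; rewrite -eq_invg1 h1 eqxx.
Qed.
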